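(* Assume the set $\mathcal{F}:=\{x\in\mathbb{R}^n:\|Ax-b\|_2\le\epsilon,\ \|x\|_2\le d\}$ is nonempty. Let $(\lambda_k)_{k\in\mathbb{N}}$ be a decreasing sequence of positive numbers with $\lambda_k\to0$, and for each $k$ let $x^k$ be an optimal solution of $\min\{Q_{\lambda_k}(x):x\in\mathbb{R}^n\}$. Then: (i) $(x^k)$ is bounded; (ii) every accumulation point $x^\star$ of $(x^k)$ satisfies $x^\star\in D$ and $Ax^\star\in C$; (iii) every accumulation point $x^\star$ of $(x^k)$ is an optimal solution of $\min\{\|x\|_1/\|x\|_2: x\in\mathcal{F}\}$.
   Context: Let $A\in\mathbb{R}^{m\times n}$, $b\in\mathbb{R}^m$, $\epsilon\ge 0$ with $\|b\|_2>\epsilon$, and $d>0$. $C:=\{y\in\mathbb{R}^m:\|y-b\|_2\le\epsilon\}$, $D:=\{x\in\mathbb{R}^n:\|x\|_2\le d\}$, $\mathrm{env}(y):=\frac12\big((\|y-b\|_2-\epsilon)_+\big)^2$ for $y\in\mathbb{R}^m$. For $\lambda>0$, $Q_\lambda(x):=(\lambda\|x\|_1+\mathrm{env}(Ax))/\|x\|_2$ if $x\in D\setminus\{0_n\}$ and $Q_\lambda(x):=+\infty$ otherwise. *)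

(* Defs.v *)
From HB Require Import structures.
From mathcomp Require Import all_boot all_order all_algebra.
From mathcomp Require Import all_classical all_reals all_analysis.
Set Implicit Arguments. Unset Strict Implicit. Unset Printing Implicit Defensive.
Import Order.TTheory GRing.Theory Num.Theory.
Local Open Scope ring_scope.

Section Defs.
Variable R : realType.

Definition norm2 (k : nat) (x : 'cV[R]_k) : R :=
  Num.sqrt (\sum_(i < k) (x i 0) ^+ 2).

Definition norm1 (k : nat) (x : 'cV[R]_k) : R := \sum_(i < k) `|x i 0|.

Definition inC (m : nat) (b : 'cV[R]_m) (eps : R) (y : 'cV[R]_m) : Prop :=
  norm2 (y - b) <= eps.

Definition inD (n : nat) (d : R) (x : 'cV[R]_n) : Prop := norm2 x <= d.

Definition env (m : nat) (b : 'cV[R]_m) (eps : R) (y : 'cV[R]_m) : R :=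
  2^-1 * (Num.max (norm2 (y - b) - eps) 0) ^+ 2.

Definition Q (m n : nat) (A : 'M[R]_(m, n)) (b : 'cV[R]_m) (eps d lam : R)
  (x : 'cV[R]_n) : \bar R :=
  if `[< inD d x /\ x != 0 >]
  then ((lam * norm1 x + env b eps (A *m x)) / norm2 x)%:E
  else +oo%E.

Definition is_minimizer (n : nat) (f : 'cV[R]_n -> \bar R) (x : 'cV[R]_n) : Prop :=
  forall y, (f x <= f y)%E.

Definition inF (m n : nat) (A : 'M[R]_(m, n)) (b : 'cV[R]_m) (eps d : R)
  (x : 'cV[R]_n) : Prop := inC b eps (A *m x) /\ inD d x.

Definition accumulation_point (n : nat) (u : nat -> 'cV[R]_n) (p : 'cV[R]_n) : Prop :=
  forall e : R, 0 < e -> forall N : nat, exists k : nat, (N <= k)%N /\ norm2 (u k - p) < e.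

End Defs.

(* Main.v *)
Require Import Defs.
From HB Require Import structures.
From mathcomp Require Import all_boot all_order all_algebra.
From mathcomp Require Import all_classical all_reals all_analysis.
From mathcomp Require Import ring lra.
Import Order.TTheory GRing.Theory Num.Theory.
Import numFieldNormedType.Exports.
Local Open Scope classical_set_scope.
Local Open Scope ring_scope.

Set Implicit Arguments. Unset Strict Implicit.
Section L.
Variable R : realType.

Lemma norm2_ge0 k (v : 'cV[R]_k) : 0 <= norm2 v.
Proof. exact: sqrtr_ge0. Qed.

Lemma sq_norm2 k (v : 'cV[R]_k) : norm2 v ^+ 2 = \sum_i (v i 0) ^+ 2.
Proof. by rewrite sqr_sqrtr //; apply: sumr_ge0 => i _; exact: sqr_ge0. Qed.

Lemma norm2N k (v : 'cV[R]_k) : norm2 (- v) = norm2 v.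
Proof. by rewrite /norm2; congr Num.sqrt; apply: eq_bigr => i _; rewrite mxE sqrrN. Qed.

Lemma coord_le_norm2 k (v : 'cV[R]_k) i : `|v i 0| <= norm2 v.
Proof.
rewrite -sqrtr_sqr /norm2 ler_sqrt; last by apply: sumr_ge0 => j _; exact: sqr_ge0.
rewrite (bigD1 i) //= lerDl; apply: sumr_ge0 => j _; exact: sqr_ge0.
Qed.

Lemma norm2_gt0 k (v : 'cV[R]_k) : v != 0 -> 0 < norm2 v.
Proof.
move=> nz; rewrite lt_neqAle norm2_ge0 andbT; apply: contra nz => /eqP h.
apply/eqP/matrixP => i j; rewrite (ord1 j) mxE; apply/eqP.
by rewrite -normr_le0 h; exact: coord_le_norm2.
Qed.

Lemma norm2_eq0 k (v : 'cV[R]_k) : norm2 v = 0 -> forall i, v i 0 = 0.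
Proof. by move=> h i; apply/eqP; rewrite -normr_le0 -h coord_le_norm2. Qed.

Lemma cs k (u v : 'cV[R]_k) : \sum_i (u i 0 * v i 0) <= norm2 u * norm2 v.
Proof.
have [U0|U0] := eqVneq (norm2 u) 0.
  rewrite big1 ?mulr_ge0 ?norm2_ge0 // => i _; by rewrite (norm2_eq0 U0) mul0r.
have [V0|V0] := eqVneq (norm2 v) 0.
  rewrite big1 ?mulr_ge0 ?norm2_ge0 // => i _; by rewrite (norm2_eq0 V0) mulr0.
have Up : 0 < norm2 u by rewrite lt_neqAle eq_sym U0 norm2_ge0.
have Vp : 0 < norm2 v by rewrite lt_neqAle eq_sym V0 norm2_ge0.
set t := norm2 v / norm2 u.
have tp : 0 < t by rewrite divr_gt0.
have h : forall a b : R, 2 * (a * b) <= t * a ^+ 2 + b ^+ 2 / t.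
  move=> a b; rewrite -subr_ge0.
  have -> : t * a ^+ 2 + b ^+ 2 / t - 2 * (a * b) = (t * a - b) ^+ 2 / t.
    by field; rewrite gt_eqF.
  by rewrite divr_ge0 ?sqr_ge0 // ltW.
have : 2 * \sum_i (u i 0 * v i 0) <= t * norm2 u ^+ 2 + norm2 v ^+ 2 / t.
  rewrite !sq_norm2 mulr_sumr [t * _]mulr_sumr mulr_suml -big_split /=.
  by apply: ler_sum => i _; exact: h.
have -> : t * norm2 u ^+ 2 + norm2 v ^+ 2 / t = 2 * (norm2 u * norm2 v).
  by rewrite /t; field; rewrite !gt_eqF.
by move=> H; rewrite -(ler_pM2l (_ : 0 < 2 :> R)).
Qed.

Lemma norm2D k (u v : 'cV[R]_k) : norm2 (u + v) <= norm2 u + norm2 v.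
Proof.
have hp : 0 <= norm2 u + norm2 v by rewrite addr_ge0 ?norm2_ge0.
rewrite -(ger0_norm hp) -sqrtr_sqr {1}/norm2 ler_sqrt ?sqr_ge0 //.
have -> : \sum_i ((u + v) i 0) ^+ 2 =
   \sum_i (u i 0) ^+ 2 + 2 * \sum_i (u i 0 * v i 0) + \sum_i (v i 0) ^+ 2.
  rewrite mulr_sumr -!big_split /=; apply: eq_bigr => i _; rewrite mxE; ring.
rewrite -!sq_norm2; have := cs u v; nra.
Qed.

Lemma norm2_sub k (u v : 'cV[R]_k) : norm2 u <= norm2 v + norm2 (u - v).
Proof. by have := norm2D v (u - v); rewrite addrC subrK. Qed.

Lemma norm2_symm k (u v : 'cV[R]_k) : norm2 (u - v) = norm2 (v - u).
Proof. by rewrite -norm2N opprB. Qed.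

Lemma norm1_ge0 k (v : 'cV[R]_k) : 0 <= norm1 v.
Proof. by apply: sumr_ge0 => i _. Qed.

Lemma norm1_sub k (u v : 'cV[R]_k) : norm1 u <= norm1 v + norm1 (u - v).
Proof.
rewrite /norm1 -big_split /=; apply: ler_sum => i _.
by rewrite !mxE -{1}(subrK (v i 0) (u i 0)) addrC (le_trans (ler_normD _ _)) // addrC.
Qed.

Lemma norm1_le k (v : 'cV[R]_k) : norm1 v <= k%:R * norm2 v.
Proof.
rewrite /norm1 (@le_trans _ _ (\sum_(i < k) norm2 v)) //.
  by apply: ler_sum => i _; exact: coord_le_norm2.
by rewrite sumr_const card_ord mulr_natl.
Qed.

Lemma norm2_le1 k (v : 'cV[R]_k) : norm2 v <= norm1 v.
Proof.
rewrite -(ger0_norm (norm1_ge0 v)) -sqrtr_sqr {1}/norm2 ler_sqrt ?sqr_ge0 //.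
rewrite expr2 /norm1 mulr_suml; apply: ler_sum => i _.
have -> : v i 0 ^+ 2 = `|v i 0| * `|v i 0| by rewrite -normrM -expr2 ger0_norm ?sqr_ge0.
rewrite ler_wpM2l //.
by rewrite (bigD1 i) //= lerDl; apply: sumr_ge0.
Qed.

Lemma norm2_mul m n (A : 'M[R]_(m, n)) (v : 'cV[R]_n) :
  norm2 (A *m v) <= (\sum_i \sum_j `|A i j|) * norm2 v.
Proof.
apply: (le_trans (norm2_le1 _)); rewrite /norm1 mulr_suml; apply: ler_sum => i _.
rewrite mxE mulr_suml; apply: (le_trans (ler_norm_sum _ _ _)); apply: ler_sum => j _.
by rewrite normrM ler_wpM2l // coord_le_norm2.
Qed.


Lemma env_ge0 m (b : 'cV[R]_m) eps y : 0 <= env b eps y.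
Proof. by rewrite /env mulr_ge0 ?sqr_ge0 // invr_ge0. Qed.

Lemma env0 m (b : 'cV[R]_m) eps y : inC b eps y -> env b eps y = 0.
Proof. by rewrite /inC /env => h; rewrite max_r ?subr_le0 // expr0n mulr0. Qed.

Lemma env_small m (b : 'cV[R]_m) eps y e : 0 < e ->
  env b eps y < e ^+ 2 / 2 -> norm2 (y - b) < eps + e.
Proof.
move=> e0; rewrite /env; apply: contraTT; rewrite -!leNgt => h.
set M := Num.max _ _.
have hM : e <= M by rewrite /M le_max; apply/orP; left; rewrite lerBrDl.
have : e ^+ 2 <= M ^+ 2 by rewrite lerXn2r // ?nnegrE ltW // (lt_le_trans e0).
move=> h2; lra.
Qed.

End L.
Unset Implicit Arguments. Set Strict Implicit.

Theorem mainTheorem3 (R : realType) (m n : nat) (A : 'M[R]_(m, n)) (b : 'cV[R]_m)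
  (eps d : R) (lam : nat -> R) (x : nat -> 'cV[R]_n) :
  0 <= eps -> eps < norm2 b -> 0 < d ->
  (exists z : 'cV[R]_n, inF A b eps d z) ->
  (forall k, 0 < lam k) ->
  (forall k, lam k.+1 < lam k) ->
  lam @ \oo --> (0 : R) ->
  (forall k, is_minimizer (Q A b eps d (lam k)) (x k)) ->
  (exists M : R, forall k, norm2 (x k) <= M) /\
  (forall xs, accumulation_point x xs -> inD d xs /\ inC b eps (A *m xs)) /\
  (forall xs, accumulation_point x xs ->
     inF A b eps d xs /\
     forall y, inF A b eps d y -> norm1 xs / norm2 xs <= norm1 y / norm2 y).
Proof.
move=> eps0 epsb d0 [z Fz] lam0 lamdec lamcvg xmin.
have feas_nz : forall y : 'cV[R]_n, inC b eps (A *m y) -> y != 0.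
  move=> y Cy; apply/eqP => y0; move: Cy; rewrite y0 /inC mulmx0 sub0r norm2N.
  by rewrite leNgt epsb.
have xD : forall k, inD d (x k) /\ x k != 0.
  move=> k; have := xmin k z; rewrite /Q (asboolT (conj Fz.2 (feas_nz z Fz.1))).
  by case: asboolP => // _; rewrite leye_eq.
have key : forall k y, inF A b eps d y ->
    lam k * norm1 (x k) + env b eps (A *m x k) <= lam k * (norm1 y / norm2 y) * norm2 (x k).
  move=> k y Fy; have := xmin k y.
  rewrite /Q (asboolT (xD k)) (asboolT (conj Fy.2 (feas_nz y Fy.1))) lee_fin.
  rewrite (env0 Fy.1) addr0 ler_pdivrMr ?norm2_gt0 ?(xD k).2 //.
  by rewrite mulrA.
set c := norm1 z / norm2 z.
have c0 : 0 <= c by rewrite divr_ge0 ?norm1_ge0 ?norm2_ge0.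
have envb : forall k, env b eps (A *m x k) <= lam k * (c * d).
  move=> k; have := key k z Fz.
  have h1 : lam k * c * norm2 (x k) <= lam k * c * d.
    by apply: ler_wpM2l; [rewrite mulr_ge0 // ltW | case: (xD k)].
  have h2 : 0 <= lam k * norm1 (x k) by rewrite mulr_ge0 ?norm1_ge0 ?ltW.
  rewrite -/c; lra.
have ratio : forall k y, inF A b eps d y ->
    norm1 (x k) <= (norm1 y / norm2 y) * norm2 (x k).
  move=> k y Fy; have := key k y Fy; have := env_ge0 b eps (A *m x k).
  move=> h1 h2; rewrite -(ler_pM2l (lam0 k)) mulrA; lra.
have partD : forall xs, accumulation_point x xs -> inD d xs.
  move=> xs acc; rewrite /inD; apply/ler_addgt0Pr => e e0.
  have [k [_ hk]] := acc e e0 0%N.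
  have := norm2_sub xs (x k); rewrite norm2_symm; have := (xD k).1; rewrite /inD; lra.
have partC : forall xs, accumulation_point x xs -> inC b eps (A *m xs).
  move=> xs acc; rewrite /inC; apply/ler_addgt0Pr => e e0.
  set K := \sum_i \sum_j `|A i j|.
  have K0 : 0 <= K by apply: sumr_ge0 => i _; apply: sumr_ge0.
  set eta := e / 2 / (K + 1).
  have eta0 : 0 < eta by rewrite divr_gt0 ?divr_gt0 // ltr_wpDl.
  have etaK : (K + 1) * eta = e / 2 by rewrite /eta; field; rewrite gt_eqF // ltr_wpDl.
  set t := e ^+ 2 / 8 / (c * d + 1).
  have cd0 : 0 <= c * d by rewrite mulr_ge0 // ltW.
  have t0 : 0 < t by rewrite divr_gt0 ?divr_gt0 ?exprn_gt0 // ltr_wpDl.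
  have tK : t * (c * d + 1) = e ^+ 2 / 8 by rewrite /t; field; rewrite gt_eqF // ltr_wpDl.
  move: lamcvg => /cvgrPdist_lt/(_ t t0) [N _ HN].
  have [k [kN hk]] := acc eta eta0 N.
  have lk : lam k < t.
    by have := HN k kN; rewrite /= sub0r normrN gtr0_norm.
  have henv : env b eps (A *m x k) < (e / 2) ^+ 2 / 2.
    apply: (le_lt_trans (envb k)).
    have : lam k * (c * d + 1) < t * (c * d + 1) by rewrite ltr_pM2r // ltr_wpDl.
    rewrite tK => h; have : lam k * (c * d) <= lam k * (c * d + 1).
      by apply: ler_wpM2l; [exact: ltW | lra].
    move: h; rewrite expr_div_n; lra.
  have h1 := env_small (divr_gt0 e0 (ltr0n R 2)) henv.
  have h2 := norm2_sub (A *m xs - b) (A *m x k - b).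
  rewrite (_ : A *m xs - b - (A *m x k - b) = A *m (xs - x k)) in h2; last first.
    by rewrite mulmxBr opprB addrA subrK.
  have h3 := norm2_mul A (xs - x k).
  rewrite -/K norm2_symm in h3.
  have h4 : K * norm2 (x k - xs) <= K * eta by apply: ler_wpM2l => //; exact: ltW.
  have h5 : K * eta <= e / 2 by rewrite -etaK; apply: ler_wpM2r; [exact: ltW | lra].
  lra.
split; first by exists d => k; case: (xD k).
split; first by move=> xs acc; split; [exact: partD | exact: partC].
move=> xs acc; have Fxs : inF A b eps d xs by split; [exact: partC | exact: partD].
split=> // y Fy.
have xs0 : 0 < norm2 xs by apply: norm2_gt0; apply: feas_nz; exact: Fxs.1.
set r := norm1 y / norm2 y.
have r0 : 0 <= r by rewrite divr_ge0 ?norm1_ge0 ?norm2_ge0.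
rewrite ler_pdivrMr //; apply/ler_addgt0Pr => e e0.
set eta := e / (r + n%:R + 1).
have den0 : 0 < r + n%:R + 1 by rewrite ltr_wpDl // addr_ge0.
have eta0 : 0 < eta by rewrite divr_gt0.
have etaK : (r + n%:R + 1) * eta = e by rewrite /eta; field; rewrite gt_eqF.
have [k [_ hk]] := acc eta eta0 0%N.
have ha := norm1_sub xs (x k).
have hb := norm1_le (xs - x k).
have hc := ratio k y Fy.
have hd := norm2_sub (x k) xs.
have he : n%:R * norm2 (xs - x k) <= n%:R * eta by rewrite norm2_symm; apply: ler_wpM2l => //; exact: ltW.
have hf : r * norm2 (x k) <= r * (norm2 xs + eta).
  by apply: ler_wpM2l => //; lra.
rewrite -/r in hc; lra.
Qed.
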